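(* Let $\mathbb{K}$ be a field of characteristic zero containing all complex roots of unity and $q$ an indeterminate transcendental over $\mathbb{K}$. Let $f_n(q)$ be a $q$-holonomic sequence satisfying a recurrence $\sum_{j=0}^d c_j(q,q^n)f_{n+j}(q)=0$ for all $n\in\mathbb{N}$, with $c_j\in\mathbb{K}[u,v]$ and $c_d\neq0$ (order $d$). Then for any root of unity $\omega\in\mathbb{C}$ of order $m$, the sequence $f_n(\omega q)$ is $q$-holonomic as well and satisfies a recurrence of this form of order at most $m\cdot d$.
   Context: A sequence $f_n(q)$ is $q$-holonomic if it satisfies a nontrivial linear recurrence $\sum_{j=0}^d c_j(q,q^n)f_{n+j}(q)=0$ for all $n\in\mathbb{N}$, with bivariate polynomials $c_j(u,v)\in\mathbb{K}[u,v]$ and $c_d\neq0$. *)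

(* Defs.v *)
From HB Require Import structures.
From mathcomp Require Import all_boot all_order all_algebra.
From mathcomp Require Import generic_quotient fraction.
Set Implicit Arguments. Unset Strict Implicit. Unset Printing Implicit Defensive.
Import GRing.Theory.
Local Open Scope ring_scope.

Notation Kq K := {fraction {poly K}}.

(* A bivariate polynomial c(u,v) in K[u,v] is encoded as c : {poly {poly K}},
   the inner variable being u and the outer variable being v.
   [evalq c n] is c(q, q^n) in K(q). *)
Definition evalq (K : fieldType) (c : {poly {poly K}}) (n : nat) : Kq K :=
  (map_poly (fun p : {poly K} => FracField.tofrac p) c).[FracField.tofrac ('X^n : {poly K})].

Definition qrec (K : fieldType) (f : nat -> Kq K) (d : nat)
    (c : nat -> {poly {poly K}}) : Prop :=
  c d != 0 /\ forall n : nat, \sum_(j < d.+1) evalq (c j) n * f (n + j)%N = 0.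

Definition q_holonomic (K : fieldType) (f : nat -> Kq K) : Prop :=
  exists d c, @qrec K f d c.

Definition substq (K : fieldType) (w : K) (x : Kq K) : Kq K :=
  let r := repr x in
  FracField.tofrac (r.1 \Po (w *: 'X)) / FracField.tofrac (r.2 \Po (w *: 'X)).

(* Main.v *)
Require Import Defs.
From HB Require Import structures.
From mathcomp Require Import all_boot all_order all_algebra.
From mathcomp Require Import generic_quotient fraction.
From mathcomp Require Import zify.
Import GRing.Theory.
Local Open Scope ring_scope.

Lemma nontriv (F : fieldType) (I J : finType) (a : J -> I -> F) :
  (#|J| < #|I|)%N -> exists u : I -> F, (exists i, u i != 0) /\
    forall j, \sum_i u i * a j i = 0.
Proof.
move=> hIJ.
pose A : 'M[F]_(#|I|, #|J|) := \matrix_(i, j) a (enum_val j) (enum_val i).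
have hA i j : A i j = a (enum_val j) (enum_val i) by rewrite mxE.
have hK : kermx A != 0.
  rewrite -mxrank_eq0 mxrank_ker subn_eq0 -ltnNge.
  exact: leq_ltn_trans (rank_leq_col A) hIJ.
have [i0 hi0] : exists i0, row i0 (kermx A) != 0.
  apply/existsP; apply: contraNT hK; rewrite negb_exists => /forallP h.
  apply/eqP/matrixP => i j; rewrite mxE.
  by move: (h i); rewrite negbK => /eqP /matrixP /(_ 0 j); rewrite !mxE.
pose v := row i0 (kermx A).
have hv : v *m A = 0 by rewrite /v -row_mul mulmx_ker row0.
exists (fun i => v 0 (enum_rank i)); split.
  have [j hj] : exists j, v 0 j != 0.
    apply/existsP; apply: contraNT hi0; rewrite negb_exists => /forallP h.
    apply/eqP/matrixP => i j; rewrite (ord1 i) [RHS]mxE.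
    by move: (h j); rewrite negbK => /eqP.
  by exists (enum_val j); rewrite enum_valK.
move=> j; move/matrixP: hv => /(_ 0 (enum_rank j)); rewrite !mxE => hj.
rewrite -[RHS]hj (reindex (@enum_val I predT)) /=; last first.
  by exists enum_rank => x _; rewrite ?enum_valK ?enum_rankK.
apply: eq_bigr => k _; rewrite hA enum_rankK; congr (_ * _).
by rewrite /v; congr (_ _ _); apply: enum_valK.
Qed.

Lemma ineq m' d a :
  (((m' * d).+1 + d) * (((m' * d).+1 * a) * m') < (m' * d).+1 * (m'.+1 * ((m' * d).+1 * a) - a).+1)%N.
Proof.
set N := (m' * d).+1%N.
have hN : N = (m' * d + 1)%N by rewrite /N addn1.
have e1 : (m'.+1 * (N * a) - a = m' * N * a + (N - 1) * a)%N.
  rewrite hN; nia.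
rewrite e1 hN. nia. Qed.

Lemma arith (M a s t e : nat) : (M <= e)%N -> (s <= a)%N -> (t < (M - a).+1)%N -> (a <= M)%N -> (s <= e - t)%N.
Proof. lia. Qed.

Section Core.
Variables (F : fieldType) (rho : F).
Hypothesis hrho : rho != 0.

Definition sig (i : nat) (p : {poly F}) := p \Po ((rho ^+ i) *: 'X).

Lemma size_sig i p : size (sig i p) = size p.
Proof.
apply: size_comp_poly2; rewrite size_scale ?size_polyX //.
by rewrite expf_neq0.
Qed.

Lemma horner_sig i p y : (sig i p).[y] = p.[rho ^+ i * y].
Proof. by rewrite /sig horner_comp hornerZ hornerX. Qed.

Lemma sig_neq0 i p : p != 0 -> sig i p != 0.
Proof. by rewrite -!size_poly_eq0 size_sig. Qed.

Definition Bx (d N D : nat) (A : nat -> {poly F}) (x : 'I_N * 'I_D) (k : nat) : {poly F} :=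
  \sum_(j < d.+1) (if (x.1 + j == k)%N then 'X^(x.2) * sig x.1 (A j) else 0).

Lemma sum_ind (K : nat) (G : nat -> F) (s : nat) : (s < K)%N ->
  \sum_(k < K) (if (s == k)%N then G k else 0) = G s.
Proof.
move=> hs; rewrite (bigD1 (Ordinal hs)) //= eqxx big1 ?addr0 // => k hk.
rewrite ifF //; apply/negbTE; apply: contra hk => /eqP e.
by apply/eqP/val_inj; rewrite /= e.
Qed.

Lemma seq_id (d N D : nat) (A : nat -> {poly F}) (u : 'I_N * 'I_D -> F)
  (P g : nat -> F) (hP : forall n, P n.+1 = rho * P n)
  (hg : forall n, \sum_(j < d.+1) (A j).[P n] * g (n + j)%N = 0) (n : nat) :
  \sum_(k < N + d) (\sum_x u x *: Bx d N D A x k).[P n] * g (n + k)%N = 0.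
Proof.
have hPi i n' : rho ^+ i * P n' = P (n' + i)%N.
  elim: i => [|i IH]; first by rewrite expr0 mul1r addn0.
  by rewrite exprS -mulrA IH addnS hP.
transitivity (\sum_(k < N + d) \sum_(x : 'I_N * 'I_D) \sum_(j < d.+1)
   (if (x.1 + j == k)%N then u x * (P n ^+ x.2 * (A j).[P (n + x.1)%N]) * g (n + k)%N else 0)).
  apply: eq_bigr => k _; rewrite horner_sum mulr_suml; apply: eq_bigr => x _.
  rewrite hornerZ /Bx horner_sum !mulr_sumr mulr_suml; apply: eq_bigr => j _.
  case: ifP => _; last by rewrite horner0 !mulr0 mul0r.
  by rewrite hornerM hornerXn horner_sig hPi !mulrA.
rewrite exchange_big big1 // => x _; rewrite exchange_big /=.
transitivity (\sum_(j < d.+1) u x * P n ^+ x.2 * ((A j).[P (n + x.1)%N] * g ((n + x.1) + j)%N)).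
  apply: eq_bigr => j _.
  rewrite (sum_ind _ (fun k => u x * (P n ^+ x.2 * (A j).[P (n + x.1)%N]) * g (n + k)%N)).
    by rewrite !mulrA addnA.
  by rewrite -addSn leq_add // -ltnS.
by rewrite -big_distrr /= hg mulr0.
Qed.

Lemma core (m d : nat) (hm : (0 < m)%N) (A : nat -> {poly F}) (hA : A d != 0) :
  exists (d' : nat) (lam : nat -> {poly F}),
  [/\ (d' <= m * d)%N, lam d' != 0,
      forall k, (k <= d')%N -> forall e, ~~ (m %| e)%N -> (lam k)`_e = 0 &
      forall (P g : nat -> F), (forall n, P n.+1 = rho * P n) ->
        (forall n, \sum_(j < d.+1) (A j).[P n] * g (n + j)%N = 0) ->
        forall n, \sum_(k < d'.+1) (lam k).[P n] * g (n + k)%N = 0].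
Proof.
case: m hm => // m' _.
set N := (m' * d).+1.
set a := \max_(j < d.+1) size (A j).
set T := (N * a)%N.
set D := (m'.+1 * T - a)%N.
pose I : finType := ('I_N * 'I_D.+1)%type.
pose J : finType := ('I_(N + d) * ('I_T * 'I_m'))%type.
pose coefa (j : J) (x : I) := (Bx d N D.+1 A x j.1)`_(m'.+1 * j.2.1 + j.2.2 + 1).
have hcard : (#|J| < #|I|)%N by rewrite !card_prod !card_ord; exact: ineq.
have [u [[x0 hx0] hu]] := @nontriv F I J coefa hcard.
pose lam k := \sum_(x : I) u x *: Bx d N D.+1 A x k.
pose Pr i := [exists x : I, (x.1 == i :> nat) && (u x != 0)].
have hex : exists i, Pr i.
  by exists x0.1; apply/existsP; exists x0; rewrite eqxx hx0.
have hbound : forall i, Pr i -> (i <= N)%N.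
  by move=> i /existsP [x /andP [/eqP <- _]]; apply: ltnW.
case: (ex_maxnP hex hbound) => i0 /existsP [x1 /andP [/eqP hx1 hux1]] hmax.
have hzero : forall x : I, (i0 < x.1)%N -> u x = 0.
  move=> x hx; apply/eqP; apply: contraTT hx => hux; rewrite -leqNgt.
  by apply: hmax; apply/existsP; exists x; rewrite eqxx hux.
have hi0N : (i0 < N)%N by rewrite -hx1.
have ha : forall j : 'I_d.+1, (size (A j) <= a)%N.
  by move=> j; rewrite /a; apply: (leq_bigmax j).
exists (i0 + d)%N, lam; split.
- rewrite mulSn addnC leq_add2l -ltnS; exact: hi0N.
- have -> : lam (i0 + d)%N =
      (\sum_(x : I | x.1 == i0 :> nat) u x *: 'X^(x.2)) * sig i0 (A d).
    rewrite /lam [in RHS]big_mkcond mulr_suml; apply: eq_bigr => x _ /=.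
    case: (ltngtP x.1 i0) => h.
    + rewrite mul0r /Bx big1 ?scaler0 // => j _; rewrite ifF //.
      apply/negbTE; rewrite neq_ltn; apply/orP; left.
      by rewrite -addSn leq_add // -ltnS.
    + by rewrite hzero // scale0r mul0r.
    + rewrite -scalerAl /Bx (bigD1 ord_max) //= h eqxx big1 ?addr0 // => j hj.
      rewrite ifF //; apply/negbTE; rewrite eqn_add2l; apply: contra hj => /eqP e.
      by apply/eqP/val_inj; rewrite /= e.
  apply: mulf_neq0; last exact: sig_neq0.
  apply/eqP => /(congr1 (fun p : {poly F} => p`_(x1.2))).
  rewrite coef0 coef_sum (bigD1 x1) /=; last by rewrite hx1.
  rewrite coefZ coefXn eqxx mulr1 big1 ?addr0; first by apply/eqP.
  move=> x /andP [hxi hxx]; rewrite coefZ coefXn.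
  case: eqP => [e|]; last by rewrite mulr0.
  exfalso; move/negP: hxx; apply; apply/eqP.
  case: x hxi e => y z /= /eqP hy e; rewrite [x1]surjective_pairing; congr (_, _); apply: val_inj => //=.
  by rewrite hy -hx1.
- move=> k hk e he.
  have hkN : (k < N + d)%N by apply: leq_ltn_trans hk _; rewrite ltn_add2r.
  rewrite /lam coef_sum.
  case: (ltnP e (m'.+1 * T)) => he2.
  + have hmod : (e %% m'.+1 != 0)%N by [].
    have ht : (e %/ m'.+1 < T)%N by rewrite ltn_divLR // mulnC.
    have hb : ((e %% m'.+1).-1 < m')%N.
      have := ltn_pmod e (ltn0Sn m'); move: hmod; lia.
    have He : (m'.+1 * (e %/ m'.+1) + (e %% m'.+1).-1 + 1 = e)%N.
      rewrite {3}(divn_eq e m'.+1); move: hmod; lia.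
    rewrite -He; transitivity (\sum_x u x * coefa (Ordinal hkN, (Ordinal ht, Ordinal hb)) x); last exact: hu.
    by apply: eq_bigr => x _; rewrite coefZ.
  + rewrite big1 // => x _; rewrite coefZ /Bx coef_sum big1 ?mulr0 // => j _.
    case: ifP => _; last by rewrite coef0.
    rewrite coefXnM; case: ifP => // _; apply: nth_default; rewrite size_sig.
    have h1 := ha j; have h2 := ltn_ord x.2.
    have h3 : (a <= T)%N by rewrite /T leq_pmull.
    have h4 : (a <= m'.+1 * T)%N by apply: leq_trans h3 _; rewrite leq_pmull.
    rewrite /D in h2; exact: (arith _ _ _ _ _ he2 h1 h2 h4).
- move=> P g hP hg n.
  have hle : ((i0 + d).+1 <= N + d)%N by rewrite -addSn leq_add2r.
  rewrite (big_ord_widen (N + d) (fun k => (lam k).[P n] * g (n + k)%N) hle).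
  rewrite big_mkcond /=.
  transitivity (\sum_(k < N + d) (lam k).[P n] * g (n + k)%N); last exact: (seq_id _ _ _ _ u _ _ hP hg n).
  apply: eq_bigr => k _.
  case: ifP => // /negbT; rewrite -leqNgt => hk.
  rewrite /lam big1 ?horner0 ?mul0r // => x _.
  case: (leqP x.1 i0) => hx; last by rewrite hzero // scale0r.
  rewrite /Bx big1 ?scaler0 // => j _; rewrite ifF //; apply/negbTE.
  rewrite neq_ltn; apply/orP; left; apply: leq_trans hk; rewrite ltnS.
  by apply: leq_add => //; rewrite -ltnS.
Qed.

End Core.

Set Implicit Arguments. Unset Strict Implicit.
Local Open Scope quotient_scope.

Lemma pi_ratio (R : idomainType) (r : {ratio R}) :
  (\pi_{fraction R} r : {fraction R}) * FracField.tofrac r.2 = FracField.tofrac r.1.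
Proof.
rewrite /FracField.tofrac -!lock.
change (FracField.mul (\pi_{fraction R} r) (\pi_{fraction R} (Ratio r.2 1)) = \pi_{fraction R} (Ratio r.1 1)).
rewrite piE.
apply/eqmodP; rewrite /= FracField.equivfE /FracField.mulf.
rewrite !numden_Ratio ?mulf_neq0 ?denom_ratioP ?oner_eq0 //.
by rewrite !mulr1 mulrC.
Qed.

Lemma repr_frac (R : idomainType) (x : {fraction R}) :
  x * FracField.tofrac (repr x).2 = FracField.tofrac (repr x).1 /\ (repr x).2 != 0.
Proof.
split; last exact: denom_ratioP.
by rewrite -{1}[x]reprK pi_ratio.
Qed.

Lemma frac_ex (R : idomainType) (x : {fraction R}) :
  exists a b, b != 0 /\ x * FracField.tofrac b = FracField.tofrac a.
Proof. by have [h1 h2] := repr_frac x; exists (repr x).1, (repr x).2. Qed.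

Section Subst.
Variables (K : fieldType) (w : K).
Hypothesis hw : w != 0.
Local Notation tf := (@FracField.tofrac {poly K}).

Definition phi (p : {poly K}) : Kq K := tf (p \Po (w *: 'X)).

Lemma size_wX : size (w *: 'X : {poly K}) = 2%N.
Proof. by rewrite size_scale ?size_polyX. Qed.

Lemma phi_eq0 p : (phi p == 0) = (p == 0).
Proof. by rewrite /phi tofrac_eq0 comp_poly2_eq0 // size_wX. Qed.
Lemma phiM p q : phi (p * q) = phi p * phi q.
Proof. by rewrite /phi comp_polyM tofracM. Qed.
Lemma phiD p q : phi (p + q) = phi p + phi q.
Proof. by rewrite /phi comp_polyD tofracD. Qed.
Lemma phi1 : phi 1 = 1.
Proof. by rewrite /phi comp_polyC tofrac1. Qed.
Lemma phi0 : phi 0 = 0.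
Proof. by rewrite /phi comp_polyC tofrac0. Qed.

Lemma substq_frac (x : Kq K) (a b : {poly K}) : b != 0 -> x * tf b = tf a ->
  substq w x = phi a / phi b.
Proof.
move=> hb hx; have [hr hr2] := repr_frac x.
rewrite /substq -/(phi _) -/(phi _).
have e : a * (repr x).2 = (repr x).1 * b.
  apply/eqP; rewrite -tofrac_eq !tofracM -hx -hr; apply/eqP.
  by rewrite mulrAC.
apply/eqP; rewrite eqr_div ?phi_eq0 //.
by rewrite -!phiM e mulrC.
Qed.

Lemma substq_tofrac p : substq w (tf p) = phi p.
Proof. by rewrite (@substq_frac _ p 1) ?oner_eq0 ?tofrac1 ?mulr1 // phi1 divr1. Qed.

Lemma substqM x y : substq w (x * y) = substq w x * substq w y.
Proof.
have [h1 h2] := repr_frac x; have [h3 h4] := repr_frac y.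
rewrite (@substq_frac (x * y) ((repr x).1 * (repr y).1) ((repr x).2 * (repr y).2)).
- rewrite (substq_frac h2 h1) (substq_frac h4 h3) !phiM.
  by rewrite invfM mulrACA.
- by rewrite mulf_neq0.
- by rewrite !tofracM mulrACA h1 h3.
Qed.

Lemma substqD x y : substq w (x + y) = substq w x + substq w y.
Proof.
have [h1 h2] := repr_frac x; have [h3 h4] := repr_frac y.
rewrite (@substq_frac (x + y) ((repr x).1 * (repr y).2 + (repr y).1 * (repr x).2) ((repr x).2 * (repr y).2)).
- rewrite (substq_frac h2 h1) (substq_frac h4 h3) phiD !phiM.
  have n2 : phi (repr x).2 != 0 by rewrite phi_eq0.
  have n4 : phi (repr y).2 != 0 by rewrite phi_eq0.
  by rewrite (addf_div _ _ n2 n4); congr (_ / _).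
- by rewrite mulf_neq0.
- rewrite !tofracM tofracD !tofracM mulrDl -h1 -h3; congr (_ + _); first by rewrite mulrA.
  by rewrite [tf (repr x).2 * _]mulrC mulrA.
Qed.

Lemma substq0 : substq w 0 = 0.
Proof. by rewrite -tofrac0 substq_tofrac phi0. Qed.
Lemma substq1 : substq w 1 = 1.
Proof. by rewrite -tofrac1 substq_tofrac phi1. Qed.
Lemma substqX x n : substq w (x ^+ n) = substq w x ^+ n.
Proof. by elim: n => [|n IH]; rewrite ?expr0 ?substq1 // !exprS substqM IH. Qed.
Lemma substq_sum (I : Type) (r : seq I) (Pr : pred I) (G : I -> Kq K) :
  substq w (\sum_(i <- r | Pr i) G i) = \sum_(i <- r | Pr i) substq w (G i).
Proof. exact: (big_morph _ substqD substq0). Qed.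

Lemma substq_evalq c n :
  substq w (evalq c n) = (map_poly phi c).[phi 'X^n].
Proof.
rewrite /evalq (horner_coef_wide _ (size_poly _ _)) /=.
rewrite (horner_coef_wide _ (size_poly _ _)).
rewrite substq_sum; apply: eq_bigr => i _.
rewrite substqM substqX substq_tofrac !coef_map_id0 ?phi0 ?tofrac0 //.
by rewrite substq_tofrac.
Qed.

End Subst.

Section Clear.
Variable R : idomainType.
Local Notation tf := (@FracField.tofrac R).

Lemma clear1 (p : {poly {fraction R}}) :
  exists s c, s != 0 /\ map_poly tf c = tf s *: p.
Proof.
elim/poly_ind: p => [|p x [s [c [hs hc]]]].
  by exists 1, 0; split; [exact: oner_neq0 | rewrite map_poly0 scaler0].
have [a [b [hb hx]]] := frac_ex x.
exists (s * b), (c * b%:P * 'X + (a * s)%:P); split; first by rewrite mulf_neq0.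
rewrite rmorphD !rmorphM /= map_polyX !map_polyC /= hc scalerDr scale_polyC.
congr (_ + _).
  rewrite [tf s *: p * _]mulrC mul_polyC scalerA -scalerAl.
  by rewrite [tf b * _]mulrC.
rewrite -polyCM; congr (_%:P); rewrite -mulrA [tf b * x]mulrC hx mulrC.
by [].
Qed.

Lemma clearB (B : nat) (lam : nat -> {poly {fraction R}}) :
  exists s (c : nat -> {poly R}), s != 0 /\
    forall k, (k <= B)%N -> map_poly tf (c k) = tf s *: lam k.
Proof.
elim: B => [|B [s1 [c1 [hs1 hc1]]]].
  have [s [c [hs hc]]] := clear1 (lam 0%N).
  by exists s, (fun _ => c); split => // k; rewrite leqn0 => /eqP ->.
have [s2 [c2 [hs2 hc2]]] := clear1 (lam B.+1).
exists (s1 * s2), (fun k => if (k <= B)%N then c1 k * s2%:P else c2 * s1%:P).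
split; first by rewrite mulf_neq0.
move=> k hk; case: ifP => hkB.
  rewrite rmorphM /= map_polyC hc1 // mulrC mul_polyC scalerA tofracM.
  by rewrite [tf s2 * _]mulrC.
have -> : k = B.+1 by apply/eqP; rewrite eqn_leq hk ltnNge hkB.
rewrite rmorphM /= map_polyC hc2 mulrC mul_polyC scalerA tofracM.
by [].
Qed.
End Clear.

Lemma horner_m (F : comNzRingType) (m : nat) (p : {poly F}) x y :
  (forall e, ~~ (m %| e)%N -> p`_e = 0) -> x ^+ m = y ^+ m -> p.[x] = p.[y].
Proof.
move=> hp hxy; rewrite !horner_coef; apply: eq_bigr => i _.
case: (boolP (m %| i)%N) => [/dvdnP [k ->] | /hp ->]; last by rewrite !mul0r.
by rewrite mulnC !exprM hxy.
Qed.

Theorem corollary1 (K : fieldType)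
  (charK0 : [pchar K] =i pred0)
  (roots_of_unity : forall k : nat, (0 < k)%N -> exists z : K, k.-primitive_root z)
  (f : nat -> Kq K) (d : nat) (c : nat -> {poly {poly K}})
  (hrec : qrec f d c)
  (m : nat) (w : K) (hm : (0 < m)%N) (hw : m.-primitive_root w) :
  q_holonomic (fun n => substq w (f n)) /\
  exists (d' : nat) (c' : nat -> {poly {poly K}}),
    (d' <= m * d)%N /\ qrec (fun n => substq w (f n)) d' c'.
Proof.
case: hrec => hcd hrec'.
have hw0 : w != 0.
  apply/eqP => w0; move: (prim_expr_order hw); rewrite w0 expr0n.
  by rewrite eqn0Ngt hm /= => /eqP; rewrite eq_sym oner_eq0.
pose rho : Kq K := (@FracField.tofrac {poly K}) (w *: 'X).
have hrho : rho != 0.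
  by rewrite /rho tofrac_eq0 scale_poly_eq0 negb_or hw0 polyX_eq0.
pose A j := map_poly (phi w) (c j).
have hA : A d != 0.
  apply: contraNneq hcd => /(congr1 (fun p : {poly Kq K} => p`_(size (c d)).-1)).
  rewrite coef_map_id0 ?phi0 // coef0 => /eqP; rewrite phi_eq0 // => hl.
  by rewrite -lead_coef_eq0.
have [d' [lam [hd' hlam hcoef hseq]]] := core (Kq K) rho hrho m d hm A hA.
pose P n : Kq K := (@FracField.tofrac {poly K}) ((w *: 'X) ^+ n).
have hP : forall n, P n.+1 = rho * P n by move=> n; rewrite /P exprS tofracM.
pose g n := substq w (f n).
have hg : forall n, \sum_(j < d.+1) (A j).[P n] * g (n + j)%N = 0.
  move=> n.
  transitivity (substq w (\sum_(j < d.+1) evalq (c j) n * f (n + j)%N));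
    last by rewrite hrec' substq0.
  rewrite substq_sum //; apply: eq_bigr => j _.
  by rewrite (substqM hw0) (substq_evalq hw0) /phi comp_Xn_poly.
have hs := hseq P g hP hg.
have [s [c' [hs0 hc']]] := clearB d' lam.
suff H : exists (d' : nat) (c' : nat -> {poly {poly K}}),
    (d' <= m * d)%N /\ qrec (fun n => substq w (f n)) d' c'.
  by split => //; case: H => d0 [c0 [_ h]]; exists d0, c0.
exists d', c'; split => //; split.
  apply/eqP => h0; move: (hc' d' (leqnn _)); rewrite h0 map_poly0 => /esym/eqP.
  by rewrite scale_poly_eq0 tofrac_eq0 (negbTE hs0) /= (negbTE hlam).
move=> n.
transitivity (\sum_(j < d'.+1) (@FracField.tofrac {poly K}) s * ((lam j).[P n] * g (n + j)%N));
  last by rewrite -big_distrr /= hs mulr0.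
apply: eq_bigr => j _.
have hj : (j <= d')%N by rewrite -ltnS.
rewrite /evalq hc' // hornerZ -mulrA; congr (_ * (_ * _)).
apply: (horner_m (hcoef j hj)).
rewrite /P -!tofracXn; congr ((@FracField.tofrac {poly K}) _).
rewrite !exprZn [w ^+ n ^+ m]exprAC (prim_expr_order hw) expr1n scale1r.
by [].
Qed.
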